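(* Let $p$ be an odd prime, $\chi$ a Dirichlet character with odd conductor $f$, and $n,c,k$ positive integers with $c\equiv0\pmod{p-1}$. Then $$\Delta_c^k\epsilon_{n,\chi}\equiv0\pmod{p^k\mathbb Z_p[\chi]},$$ where $\Delta_c^k a_n=\sum_{j=0}^k\binom kj(-1)^{k-j}a_{n+jc}$.
   Context: $\mathbb Z_p[\chi]$ is the ring generated over $\mathbb Z_p$ by the values of $\chi$. For a primitive Dirichlet character $\psi$ of odd conductor $f_\psi$, the generalized Euler numbers $E_{n,\psi}$ are defined by $2\sum_{a=1}^{f_\psi}\frac{(-1)^a\psi(a)e^{at}}{e^{f_\psi t}+1}=\sum_{n\ge0}E_{n,\psi}\frac{t^n}{n!}$ (with $\psi(a)=0$ if $\gcd(a,f_\psi)>1$). Let $\omega$ be the Teichmüller character mod $p$. For $n\ge0$, $\chi_n$ is the primitive Dirichlet character associated with $a\mapsto\chi(a)\omega^{-n}(a)$ on $(\mathbb Z/\mathrm{lcm}(f,p)\mathbb Z)^\times$, and $\epsilon_{n,\chi}=(1-\chi_n(p)p^n)E_{n,\chi_n}$. *)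

(* Defs.v *)
From HB Require Import structures.
From mathcomp Require Import all_boot all_order all_algebra all_field.
Set Implicit Arguments. Unset Strict Implicit. Unset Printing Implicit Defensive.
Import Order.TTheory GRing.Theory Num.Theory.
Local Open Scope ring_scope.

Definition is_dirichlet (N : nat) (chi : nat -> algC) : Prop :=
  [/\ (0 < N)%N, chi 1%N = 1,
      (forall a b : nat, chi (a * b)%N = chi a * chi b),
      (forall a : nat, chi (a + N)%N = chi a) &
      (forall a : nat, (chi a == 0) = ~~ coprime a N)].

Definition induced_mod (N d : nat) (chi : nat -> algC) : bool :=
  (d %| N)%N &&
  [forall a : 'I_N, forall b : 'I_N,
     [&& coprime a N, coprime b N & a == b %[mod d]] ==> (chi a == chi b)].

Definition conductor (N : nat) (chi : nat -> algC) : nat :=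
  head N [seq d <- iota 1 N | induced_mod N d chi].

Definition primitive_char (N : nat) (chi : nat -> algC) : Prop :=
  is_dirichlet N chi /\ conductor N chi = N.

Definition lift_coprime (N d a : nat) : nat :=
  (a + d * head 0 [seq t <- iota 0 N | coprime (a + d * t) N])%N.

Definition prim_assoc (N : nat) (chi : nat -> algC) : nat -> algC :=
  fun a => if coprime a (conductor N chi) then chi (lift_coprime N (conductor N chi) a)
           else 0.

(* A fixed embedding of Qbar into Cp is encoded by the prime ideal P of the ring
   Aint of algebraic integers (in algC) lying above p. *)
Definition prime_ideal_above (p : nat) (P : pred algC) : Prop :=
  [/\ {subset P <= Aint}, 0 \in P, (p%:R : algC) \in P & (1 : algC) \notin P] /\
  [/\ (forall x y, x \in P -> y \in P -> x + y \in P),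
      (forall x y, x \in Aint -> y \in P -> x * y \in P) &
      (forall x y, x \in Aint -> y \in Aint -> x * y \in P -> (x \in P) || (y \in P))].

(* x lies in the valuation ring of P (for x in a finite extension of Q this is
   integrality in the completion at P). *)
Definition P_integral (P : pred algC) (x : algC) : Prop :=
  exists a b : algC, [/\ a \in Aint, b \in Aint, b \notin P & x = a / b].

Definition unity_roots (m : nat) : seq algC :=
  let z := sval (C_prim_root_exists (ltn0Sn m.-1)) in [seq z ^+ i | i <- iota 0 m].

Definition teich (P : pred algC) (p : nat) (a : nat) : algC :=
  if (p %| a)%N then 0 else head 0 [seq x <- unity_roots p.-1 | P (x - a%:R)].

(* E_{n,psi} for psi of conductor F, defined by the generating function
     2 sum_{a=1}^F (-1)^a psi(a) e^{at} / (e^{Ft}+1) = sum_n E_{n,psi} t^n/n!,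
   i.e. (multiplying by e^{Ft}+1 and comparing coefficients of t^n/n!)
     E_n + sum_{j=0}^n C(n,j) F^(n-j) E_j = 2 sum_{a=1}^F (-1)^a psi(a) a^n. *)
Definition euler_rhs (F : nat) (psi : nat -> algC) (n : nat) : algC :=
  2 * \sum_(1 <= a < F.+1) (-1) ^+ a * psi a * (a%:R) ^+ n.

Fixpoint euler_seq (F : nat) (psi : nat -> algC) (n : nat) : seq algC :=
  match n with
  | 0 => [:: euler_rhs F psi 0 / 2]
  | m.+1 => let s := euler_seq F psi m in
      rcons s ((euler_rhs F psi m.+1
                - \sum_(j < m.+1) ('C(m.+1, j))%:R * (F%:R) ^+ (m.+1 - j) * s`_j) / 2)
  end.

Definition gen_euler (F : nat) (psi : nat -> algC) (n : nat) : algC :=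
  (euler_seq F psi n)`_n.

Definition chi_tw (P : pred algC) (p f : nat) (chi : nat -> algC) (n : nat) : nat -> algC :=
  fun a => if coprime a (lcmn f p) then chi a * (teich P p a) ^- n else 0.

Definition chi_n P p f chi n : nat -> algC := prim_assoc (lcmn f p) (chi_tw P p f chi n).
Definition cond_n P p f chi n : nat := conductor (lcmn f p) (chi_tw P p f chi n).

Definition eps (P : pred algC) (p f : nat) (chi : nat -> algC) (n : nat) : algC :=
  (1 - chi_n P p f chi n p * (p%:R) ^+ n) * gen_euler (cond_n P p f chi n) (chi_n P p f chi n) n.

Definition Delta (c k : nat) (a : nat -> algC) (n : nat) : algC :=
  \sum_(j < k.+1) ('C(k, j))%:R * (-1) ^+ (k - j) * a (n + j * c)%N.

(* Main.v *)
Require Import Defs.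
From HB Require Import structures.
From mathcomp Require Import all_boot all_order all_algebra all_field all_solvable.
From mathcomp Require Import ring lra zify.
From Stdlib Require Import FunctionalExtensionality.
Import Order.TTheory GRing.Theory Num.Theory.
Local Open Scope ring_scope.
Set Implicit Arguments. Unset Strict Implicit. Unset Printing Implicit Defensive.

Section PI.
Variables (p : nat) (P : pred algC).
Hypothesis HP : prime_ideal_above p P.

Lemma P_sub x : x \in P -> x \in Aint.
Proof. by case: HP => [[H _ _ _] _]; apply: H. Qed.
Lemma P_add x y : x \in P -> y \in P -> x + y \in P.
Proof. by case: HP => [_ [H _ _]]; apply: H. Qed.
Lemma P_mul x y : x \in Aint -> y \in P -> x * y \in P.
Proof. by case: HP => [_ [_ H _]]; apply: H. Qed.
Lemma P_prime x y : x \in Aint -> y \in Aint -> x * y \in P -> (x \in P) || (y \in P).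
Proof. by case: HP => [_ [_ _ H]]; apply: H. Qed.
Lemma P_1 : (1 : algC) \notin P. Proof. by case: HP => [[_ _ _ H] _]. Qed.
Lemma P_p : (p%:R : algC) \in P. Proof. by case: HP => [[_ _ H _] _]. Qed.
Lemma P_opp x : x \in P -> - x \in P.
Proof. by move=> Hx; rewrite -mulN1r; apply: P_mul => //; rewrite rpredN rpred1. Qed.
Lemma P_sub2 x y : x \in P -> y \in P -> x - y \in P.
Proof. by move=> Hx Hy; apply: P_add => //; apply: P_opp. Qed.
Lemma P_mulr x y : x \in P -> y \in Aint -> x * y \in P.
Proof. by move=> Hx Hy; rewrite mulrC; apply: P_mul. Qed.

Lemma P_prod (I : eqType) (r : seq I) (F : I -> algC) :
  (forall i, F i \in Aint) -> \prod_(i <- r) F i \in P -> exists2 i, i \in r & F i \in P.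
Proof.
move=> HA; elim: r => [|a r IH]; first by rewrite big_nil (negPf P_1).
rewrite big_cons => /P_prime.
case/(_ _ _)/orP => //; [by apply: rpred_prod | move=> H; by exists a; rewrite ?mem_head |].
by case/IH => i Hi HF; exists i => //; rewrite in_cons Hi orbT.
Qed.

Definition PI := P_integral P.

Lemma PI_Aint x : x \in Aint -> PI x.
Proof. by move=> Hx; exists x, 1; rewrite divr1 rpred1 P_1. Qed.

Lemma PI_prodnz a b : a \in Aint -> b \in Aint -> a \notin P -> b \notin P -> a * b \notin P.
Proof. by move=> Ha Hb Ha' Hb'; apply/negP => /(P_prime Ha Hb); rewrite (negPf Ha') (negPf Hb'). Qed.

Lemma nz_notP b : b \notin P -> b != 0.
Proof. apply: contra => /eqP ->; by case: HP => [[_ H _ _] _]. Qed.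

Lemma PI_add x y : PI x -> PI y -> PI (x + y).
Proof.
move=> [a [b [Ha Hb Hb' ->]]] [c [d [Hc Hd Hd' ->]]].
exists (a * d + c * b), (b * d); split; rewrite ?rpredD ?rpredM //; first exact: PI_prodnz.
have b0 := nz_notP Hb'; have d0 := nz_notP Hd'.
by field; apply/andP.
Qed.

Lemma PI_mul x y : PI x -> PI y -> PI (x * y).
Proof.
move=> [a [b [Ha Hb Hb' ->]]] [c [d [Hc Hd Hd' ->]]].
exists (a * c), (b * d); split; rewrite ?rpredM //; first exact: PI_prodnz.
by rewrite invfM mulrACA.
Qed.

Lemma PI_opp x : PI x -> PI (- x).
Proof. by move=> Hx; rewrite -mulN1r; apply: PI_mul => //; apply: PI_Aint; rewrite rpredN rpred1. Qed.

Lemma PI_sub x y : PI x -> PI y -> PI (x - y).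
Proof. by move=> Hx Hy; apply: PI_add => //; apply: PI_opp. Qed.

Lemma PI_nat m : PI m%:R.
Proof. by apply: PI_Aint; rewrite rpred_nat. Qed.

Lemma PI_sum (I : Type) (r : seq I) (F : I -> algC) :
  (forall i, PI (F i)) -> PI (\sum_(i <- r) F i).
Proof.
move=> H; elim: r => [|a r IH]; first by rewrite big_nil; apply: PI_Aint; rewrite rpred0.
by rewrite big_cons; apply: PI_add.
Qed.

Lemma PI_exp x m : PI x -> PI (x ^+ m).
Proof.
move=> H; elim: m => [|m IH]; first by rewrite expr0; apply: PI_Aint; rewrite rpred1.
by rewrite exprS; apply: PI_mul.
Qed.

Hypothesis p_odd : odd p.
Hypothesis p_pr : prime p.

Lemma two_notP : (2 : algC) \notin P.
Proof.
apply/negP => H2.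
have : (p%:R - 2 * (p./2)%:R : algC) \in P.
  apply: P_sub2; first exact: P_p.
  by rewrite mulrC; apply: P_mul => //; rewrite rpred_nat.
have -> : (p%:R - 2 * (p./2)%:R : algC) = 1.
  rewrite -[in p%:R](odd_double_half p) p_odd /= natrD -muln2 natrM.
  by rewrite mulrC addrK.
by rewrite (negPf P_1).
Qed.

Lemma PI_half x : PI x -> PI (x / 2).
Proof.
move=> [a [b [Ha Hb Hb' ->]]]; exists a, (b * 2); split => //.
- by rewrite rpredM // rpred_nat.
- by apply: PI_prodnz => //; rewrite ?rpred_nat // two_notP.
by rewrite invfM mulrA.
Qed.

End PI.

Definition T (x : algC) (u : nat -> algC) (m : nat) : algC :=
  \sum_(j < m.+1) 'C(m, j)%:R * x ^+ (m - j) * u j.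

Lemma T_lin x a (u v : nat -> algC) m :
  T x (fun j => a * u j + v j) m = a * T x u m + T x v m.
Proof.
rewrite /T big_distrr -big_split /=; apply: eq_bigr => j _; ring.
Qed.

Lemma T_ext x (u v : nat -> algC) m : (forall j, u j = v j) -> T x u m = T x v m.
Proof. by move=> H; apply: eq_bigr => j _; rewrite H. Qed.

Lemma T_S x u m : T x u m.+1 = x * T x u m + T x (fun j => u j.+1) m.
Proof.
rewrite /T big_ord_recl /= bin0 subn0.
have -> : \sum_(i < m.+1) 'C(m.+1, bump 0 i)%:R * x ^+ (m.+1 - bump 0 i) * u (bump 0 i)
   = \sum_(i < m.+1) 'C(m, i.+1)%:R * x ^+ (m - i) * u i.+1
     + \sum_(i < m.+1) 'C(m, i)%:R * x ^+ (m - i) * u i.+1.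
  rewrite -big_split /=; apply: eq_bigr => i _.
  by rewrite /bump /= add1n binS natrD subSS; ring.
rewrite addrA; congr (_ + _).
rewrite big_ord_recr /= bin_small // mul0r mul0r addr0.
rewrite big_distrr /= big_ord_recl /= bin0 subn0.
congr (_ + _); first by rewrite exprS; ring.
apply: eq_bigr => i _; rewrite /bump /= add1n.
by rewrite -(subnSK (ltn_ord i)) exprS; ring.
Qed.

Lemma T_comp x y u m : T x (T y u) m = T (x + y) u m.
Proof.
elim: m u => [|m IH] u.
  by rewrite /T !big_ord1 /= !bin0 !subn0 !expr0 !mul1r.
rewrite T_S (T_S (x + y)) -IH -IH.
have H : forall j, T y u j.+1 = y * T y u j + T y (fun j => u j.+1) j by move=> j; rewrite T_S.
rewrite (T_ext x _ H) T_lin IH; ring.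
Qed.

Lemma T_pow x a m : T x (fun j => a ^+ j) m = (a + x) ^+ m.
Proof.
rewrite addrC exprDn; apply: eq_bigr => j _; rewrite -mulr_natl; ring.
Qed.

Section Euler.
Variables (psi : nat -> algC).

Lemma euler_seq_size F m : size (euler_seq F psi m) = m.+1.
Proof. by elim: m => [|m IH] //=; rewrite size_rcons IH. Qed.

Lemma euler_seq_nth F m j : (j <= m)%N -> (euler_seq F psi m)`_j = gen_euler F psi j.
Proof.
elim: m => [|m IH]; first by rewrite leqn0 => /eqP ->.
rewrite leq_eqVlt => /orP [/eqP -> // | Hj].
by rewrite /= nth_rcons euler_seq_size Hj IH.
Qed.

Lemma euler_id F m :
  T F%:R (gen_euler F psi) m + gen_euler F psi m = euler_rhs F psi m.
Proof.
rewrite /T big_ord_recr /= binn subnn expr0 mul1r.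
case: m => [|m].
  by rewrite big_ord0 add0r /gen_euler /=; field.
set S := \sum_(i < m.+1) _.
have -> : S = \sum_(j < m.+1) ('C(m.+1, j))%:R * (F%:R) ^+ (m.+1 - j) * (euler_seq F psi m)`_j.
  apply: eq_bigr => j _; rewrite euler_seq_nth //; exact: (ltn_ord j).
rewrite /gen_euler /= nth_rcons euler_seq_size ltnn eqxx.
by field.
Qed.

Lemma T0 u m : T 0 u m = u m.
Proof.
rewrite /T big_ord_recr /= binn subnn expr0 !mul1r big1 ?add0r // => j _.
by rewrite expr0n subn_eq0 leqNgt ltn_ord /= mulr0 mul0r.
Qed.

Lemma T_sum x (I : Type) (r : seq I) (c b : I -> algC) m :
  T x (fun j => \sum_(i <- r) c i * b i ^+ j) m = \sum_(i <- r) c i * (b i + x) ^+ m.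
Proof.
elim: r => [|a r IH].
  rewrite big_nil /T big1 // => j _; by rewrite big_nil mulr0.
rewrite big_cons -IH -T_pow -T_lin; apply: T_ext => j; by rewrite big_cons.
Qed.

Lemma tele (g : nat -> algC) r :
  \sum_(i < r) (-1) ^+ i * (g i.+1 + g i) = g 0%N - (-1) ^+ r * g r.
Proof.
elim: r => [|r IH]; first by rewrite big_ord0 expr0 mul1r subrr.
rewrite big_ord_recr /= IH exprS; ring.
Qed.

Lemma reindex (h : nat -> algC) F r :
  \sum_(i < r) \sum_(1 <= a < F.+1) h (a + i * F)%N = \sum_(1 <= a < (r * F).+1) h a.
Proof.
elim: r => [|r IH]; first by rewrite big_ord0 mul0n big_geq.
rewrite big_ord_recr /= IH (@big_cat_nat _ _ _ (r * F).+1 1 (r.+1 * F).+1) //=; last by rewrite mulSn; lia.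
congr (_ + _).
have -> : (r * F).+1 = (1 + r * F)%N by [].
rewrite big_addn; congr (\sum_(1 <= i < _) _); rewrite mulSn; lia.
Qed.

Lemma psi_per_iter F : (forall a, psi (a + F)%N = psi a) ->
  forall a i, psi (a + i * F)%N = psi a.
Proof. move=> H a; elim=> [|i IH]; first by rewrite addn0. by rewrite mulSn addnCA addnC H IH. Qed.

Lemma euler_idM F r m : odd F -> odd r -> (forall a, psi (a + F)%N = psi a) ->
  T (F * r)%:R (gen_euler F psi) m + gen_euler F psi m = euler_rhs (F * r) psi m.
Proof.
move=> oF or Hper; set E := gen_euler F psi.
have := tele (fun i => T (i * F)%:R E m) r.
rewrite mul0n T0 -signr_odd or expr1 mulN1r opprK mulnC addrC => <-.
have H1 : forall i, T (i.+1 * F)%:R E m + T (i * F)%:R E m = T (i * F)%:R (euler_rhs F psi) m.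
  move=> i; rewrite mulSn natrD [F%:R + _]addrC -T_comp -[X in X + _]mul1r -T_lin.
  by apply: T_ext => j; rewrite mul1r euler_id.
under eq_bigr => i _ do rewrite H1.
have H2 : forall i : 'I_r, (-1) ^+ i * T (i * F)%:R (euler_rhs F psi) m =
    \sum_(1 <= a < F.+1) (2 * (-1) ^+ (a + i * F) * psi (a + i * F)%N * ((a + i * F)%N%:R) ^+ m).
  move=> i.
  have Hx : forall j, euler_rhs F psi j =
      \sum_(a <- index_iota 1 F.+1) (2 * (-1) ^+ a * psi a) * a%:R ^+ j.
    by move=> j; rewrite /euler_rhs mulr_sumr; apply: eq_bigr => a _; rewrite !mulrA.
  rewrite (T_ext _ _ Hx) T_sum mulr_sumr; apply: eq_bigr => a _.
  have sF : (-1) ^+ F = -1 :> algC by rewrite -signr_odd oF expr1.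
  rewrite psi_per_iter // natrD exprD mulnC exprM sF; ring.
rewrite (eq_bigr _ (fun i _ => H2 i)).
rewrite (reindex (fun b => 2 * (-1) ^+ b * psi b * b%:R ^+ m)) /euler_rhs mulr_sumr mulnC.
by apply: eq_bigr => a _; rewrite !mulrA.
Qed.
End Euler.

Definition Ssum (M : nat) (psi : nat -> algC) (m : nat) : algC :=
  \sum_(1 <= a < M.+1) (-1) ^+ a * psi a * a%:R ^+ m.

Lemma T_split x u m : T x u m = \sum_(j < m) 'C(m, j)%:R * x ^+ (m - j) * u j + u m.
Proof. by rewrite /T big_ord_recr /= binn subnn expr0 !mul1r. Qed.

Section Cong.
Variables (p : nat) (P : pred algC).
Hypothesis HP : prime_ideal_above p P.
Hypothesis p_odd : odd p.
Hypothesis p_pr : prime p.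
Variables (psi : nat -> algC) (F : nat).
Hypothesis psiA : forall a, psi a \in Aint.

Lemma E_PI m : PI P (gen_euler F psi m).
Proof.
elim/ltn_ind: m => m IH.
have H := euler_id psi F m; rewrite T_split in H.
have -> : gen_euler F psi m = (euler_rhs F psi m -
   \sum_(j < m) 'C(m, j)%:R * (F%:R) ^+ (m - j) * gen_euler F psi j) / 2.
  by rewrite -H; field.
apply: (PI_half HP p_odd); apply: (PI_sub HP).
  rewrite /euler_rhs; apply: (PI_mul HP) => //; first exact: (PI_nat HP).
  apply: (PI_sum HP) => // a; apply: (PI_Aint HP) => //.
  by rewrite !rpredM ?rpredX ?rpredN ?rpred1 ?rpred_nat.
apply: (PI_sum HP) => // j; apply: (PI_mul HP) => //; last exact: IH.
by apply: (PI_Aint HP) => //; rewrite !rpredM ?rpredX ?rpred_nat.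
Qed.

Lemma euler_cong r m : odd F -> odd r -> (forall a, psi (a + F)%N = psi a) ->
  exists2 W, PI P W & gen_euler F psi m = Ssum (F * r) psi m + (F * r)%:R * W.
Proof.
move=> oF or Hper.
have H := euler_idM m oF or Hper; rewrite T_split in H.
exists (- (\sum_(j < m) 'C(m, j)%:R * (F * r)%:R ^+ (m - j).-1 * gen_euler F psi j) / 2).
  apply: (PI_half HP p_odd); apply: (PI_opp HP) => //; apply: (PI_sum HP) => // j.
  apply: (PI_mul HP) => //; last exact: E_PI.
  by apply: (PI_Aint HP) => //; rewrite !rpredM ?rpredX ?rpred_nat.
have HS : euler_rhs (F * r) psi m = 2 * Ssum (F * r) psi m.
  by rewrite /euler_rhs /Ssum.
have HT : \sum_(j < m) 'C(m, j)%:R * (F * r)%:R ^+ (m - j) * gen_euler F psi j =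
   (F * r)%:R * \sum_(j < m) 'C(m, j)%:R * (F * r)%:R ^+ (m - j).-1 * gen_euler F psi j.
  rewrite mulr_sumr; apply: eq_bigr => j _.
  have -> : (m - j)%N = (m - j).-1.+1 by rewrite prednK // subn_gt0.
  rewrite exprS /=; ring.
move: H; rewrite HS HT => H.
set E := gen_euler F psi m in H *; set S := Ssum _ _ _ in H *.
set Q := \sum_(j < m) _ in H *.
have -> : E = (2 * S - (F * r)%:R * Q) / 2 by rewrite -H; field.
by field.
Qed.
End Cong.

Lemma head_filter_in (T : eqType) (x0 : T) (Q : pred T) s :
  has Q s -> Q (head x0 (filter Q s)) /\ head x0 (filter Q s) \in s.
Proof.
elim: s => [|x s IH] //=; case Hx: (Q x) => /=; first by rewrite Hx mem_head.
by move=> /IH [H1 H2]; split => //; rewrite in_cons H2 orbT.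
Qed.

Lemma head_filter_or (T : eqType) (x0 : T) (Q : pred T) s :
  head x0 (filter Q s) = x0 \/ head x0 (filter Q s) \in s.
Proof.
case H: (has Q s); first by right; case: (head_filter_in x0 H).
by left; move/negbT: H => /hasPn H; rewrite (eq_in_filter (a2 := pred0)) ?filter_pred0 // => x /H /negPf.
Qed.

Section Teich.
Variables (p : nat) (P : pred algC).
Hypothesis HP : prime_ideal_above p P.
Hypothesis p_odd : odd p.
Hypothesis p_pr : prime p.

Let m := p.-1.
Let z := sval (C_prim_root_exists (ltn0Sn m.-1)).
Lemma m_gt1 : (1 < m)%N.
Proof. rewrite /m; have := prime_gt1 p_pr; case: p p_odd => [|[|[|q]]] //. Qed.
Lemma z_prim : m.-primitive_root z.
Proof. rewrite /z; case: (C_prim_root_exists _) => w /=; rewrite prednK //; exact: ltnW m_gt1. Qed.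

Lemma unity_rootsE : unity_roots m = [seq z ^+ i | i <- iota 0 m].
Proof. by []. Qed.

Lemma z_Aint : z \in Aint.
Proof. exact: Aint_prim_root z_prim. Qed.

Lemma ur_root u : u \in unity_roots m -> u ^+ m = 1.
Proof.
rewrite unity_rootsE => /mapP [i _ ->].
by rewrite -exprM mulnC exprM (prim_expr_order z_prim) expr1n.
Qed.

Lemma ur_Aint u : u \in unity_roots m -> u \in Aint.
Proof. rewrite unity_rootsE => /mapP [i _ ->]; exact: rpredX z_Aint. Qed.

Lemma P_prod_in (I : eqType) (r : seq I) (G : I -> algC) i0 :
  (forall i, G i \in Aint) -> i0 \in r -> G i0 \in P -> \prod_(i <- r) G i \in P.
Proof.
move=> HA; elim: r => [|a r IH] //; rewrite in_cons big_cons => /orP [/eqP <- H|H H'].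
  by apply: (P_mulr HP) => //; apply: rpred_prod.
by apply: (P_mul HP) => //; apply: IH.
Qed.

Lemma teich_exists a : ~~ (p %| a)%N -> exists2 u, u \in unity_roots m & P (u - a%:R).
Proof.
move=> pa.
have Hprod : \prod_(0 <= i < m) (a%:R - z ^+ i) = (a ^ m - 1)%N%:R :> algC.
  have := congr1 (fun q => q.[a%:R]) (factor_Xn_sub_1 z_prim).
  rewrite horner_prod /=; under eq_bigr => i _ do rewrite hornerXsubC.
  move=> ->; rewrite !hornerE natrB ?natrX // expn_gt0; case: (a) pa => //.
  by rewrite dvdn0.
have Hdvd : (p %| a ^ m - 1)%N.
  rewrite -eqn_mod_dvd; last by rewrite expn_gt0; case: (a) pa => //; rewrite dvdn0.
  rewrite /m -totient_prime // Euler_exp_totient //.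
  by rewrite coprime_sym prime_coprime.
have HinP : \prod_(0 <= i < m) (a%:R - z ^+ i) \in P.
  rewrite Hprod -(divnK Hdvd) natrM; apply: (P_mul HP); first by rewrite rpred_nat.
  exact: (P_p HP).
case: (P_prod HP _ HinP) => [i|i Hi Hin].
  by rewrite rpredB ?rpred_nat ?rpredX ?z_Aint.
exists (z ^+ i); first by rewrite unity_rootsE map_f // mem_iota add0n; rewrite mem_index_iota in Hi.
by rewrite -opprB; apply: (P_opp HP).
Qed.

Lemma prod_one_sub : \prod_(1 <= i < m) (1 - z ^+ i) = m%:R.
Proof.
have H := factor_Xn_sub_1 z_prim.
rewrite (big_ltn (ltnW m_gt1)) expr0 -[X in _ = _ - X](expr1n _ m) subrXX in H.
have nz : ('X - 1%:P : {poly algC}) != 0 by rewrite polyXsubC_eq0.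
rewrite polyC1 in H nz.
move/(mulfI nz): H => H.
have := congr1 (fun q => q.[1]) H; rewrite horner_prod /=.
under eq_bigr => i _ do rewrite hornerXsubC.
move=> ->; rewrite horner_sum.
rewrite (eq_bigr (fun _ => 1)); first by rewrite sumr_const card_ord.
by move=> i _; rewrite expr1n mulr1 hornerXn expr1n.
Qed.


Lemma ur_P_uniq u v : u \in unity_roots m -> v \in unity_roots m -> u - v \in P -> u = v.
Proof.
rewrite !unity_rootsE => /mapP [i Hi ->] /mapP [j Hj ->] Huv.
move: Hi Hj; rewrite !mem_iota !add0n => Hi Hj.
case: (eqVneq i j) => [-> //|ne].
exfalso.
wlog lt : i j Hi Hj Huv ne / (j < i)%N.
  move=> W; case: (ltngtP i j) => H; last by rewrite H eqxx in ne.
    apply: (W j i) => //; last by rewrite eq_sym.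
    by rewrite -opprB; apply: (P_opp HP).
  exact: (W i j).
set d := (i - j)%N.
have Hd : (1 <= d < m)%N by rewrite /d; lia.
have H1 : z ^+ d - 1 \in P.
  have -> : z ^+ d - 1 = z ^+ (m - j) * (z ^+ i - z ^+ j).
    rewrite mulrBr -!exprD.
    have -> : (m - j + i = m + d)%N by rewrite /d; lia.
    have -> : (m - j + j = m)%N by lia.
    by rewrite exprD (prim_expr_order z_prim) mul1r.
  by apply: (P_mul HP) => //; rewrite rpredX ?z_Aint.
have H2 : (m%:R : algC) \in P.
  rewrite -prod_one_sub; apply: (P_prod_in (i0 := d)).
  - by move=> k; rewrite rpredB ?rpred1 ?rpredX ?z_Aint.
  - by rewrite mem_index_iota.
  by rewrite -opprB; apply: (P_opp HP).
have : (p%:R - m%:R : algC) \in P by apply: (P_sub2 HP) => //; exact: (P_p HP).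
rewrite -natrB /m ?leq_pred // -subn1 subKn ?prime_gt0 //.
by rewrite (negPf (P_1 HP)).
Qed.

Lemma teich_spec a : ~~ (p %| a)%N -> teich P p a \in unity_roots m /\ P (teich P p a - a%:R).
Proof.
move=> pa; rewrite /teich (negPf pa).
case: (teich_exists pa) => u Hu HPu.
have Hh : has (fun x => P (x - a%:R)) (unity_roots p.-1) by apply/hasP; exists u.
by case: (head_filter_in 0 Hh) => H1 H2; split.
Qed.

Lemma teich_uniq a u : ~~ (p %| a)%N -> u \in unity_roots m -> P (u - a%:R) -> teich P p a = u.
Proof.
move=> pa Hu HPu; case: (teich_spec pa) => H1 H2.
apply: ur_P_uniq => //.
have -> : teich P p a - u = (teich P p a - a%:R) - (u - a%:R) by ring.
exact: (P_sub2 HP).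
Qed.

Lemma teichM a b : ~~ (p %| a)%N -> ~~ (p %| b)%N -> teich P p (a * b) = teich P p a * teich P p b.
Proof.
move=> pa pb; have pab : ~~ (p %| a * b)%N by rewrite Euclid_dvdM // negb_or pa pb.
case: (teich_spec pa) => Ha HPa; case: (teich_spec pb) => Hb HPb.
apply: teich_uniq => //.
  move: Ha Hb; rewrite !unity_rootsE => /mapP [i _ ->] /mapP [j _ ->].
  rewrite -exprD -(prim_expr_mod z_prim); apply: map_f.
  by rewrite mem_iota /= ltn_pmod // ltnW // m_gt1.
have -> : teich P p a * teich P p b - (a * b)%N%:R =
   teich P p a * (teich P p b - b%:R) + b%:R * (teich P p a - a%:R) by rewrite natrM; ring.
apply: (P_add HP); apply: (P_mul HP) => //; try by rewrite ?rpred_nat.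
exact: ur_Aint.
Qed.

Lemma teich_0_or a : teich P p a = 0 \/ teich P p a \in unity_roots m.
Proof. rewrite /teich; case: (p %| a)%N; [by left | exact: head_filter_or]. Qed.

End Teich.

Section Char.
Variables (p f : nat) (chi : nat -> algC) (P : pred algC) (n : nat).
Hypothesis HP : prime_ideal_above p P.
Hypothesis p_odd : odd p.
Hypothesis p_pr : prime p.
Hypothesis f_odd : odd f.
Hypothesis chiD : is_dirichlet f chi.
Hypothesis n_gt0 : (0 < n)%N.

Let N0 := lcmn f p.
Let g := chi_tw P p f chi n.

Lemma f_gt0 : (0 < f)%N. Proof. by case: chiD. Qed.
Lemma N0_gt0 : (0 < N0)%N. Proof. by rewrite lcmn_gt0 f_gt0 prime_gt0. Qed.
Lemma p_N0 : (p %| N0)%N. Proof. exact: dvdn_lcmr. Qed.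
Lemma f_N0 : (f %| N0)%N. Proof. exact: dvdn_lcml. Qed.
Lemma N0_odd : odd N0.
Proof. apply: (@dvdn_odd _ (f * p)); first by rewrite dvdn_lcm dvdn_mulr // dvdn_mull. by rewrite oddM f_odd p_odd. Qed.

Lemma chi_mul a b : chi (a * b)%N = chi a * chi b. Proof. by case: chiD. Qed.
Lemma chi_1 : chi 1%N = 1. Proof. by case: chiD. Qed.
Lemma chi_per a : chi (a + f)%N = chi a. Proof. by case: chiD. Qed.
Lemma chi_0 a : (chi a == 0) = ~~ coprime a f. Proof. by case: chiD. Qed.

Lemma chi_perk a k : chi (a + k * f)%N = chi a.
Proof. elim: k => [|k IH]; first by rewrite addn0. by rewrite mulSn addnCA addnC chi_per IH. Qed.

Lemma chi_mod a : chi (a %% f)%N = chi a.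
Proof. by rewrite {2}(divn_eq a f) addnC chi_perk. Qed.

Lemma chi_exp a k : chi (a ^ k)%N = chi a ^+ k.
Proof. elim: k => [|k IH]; first by rewrite expn0 chi_1. by rewrite expnS chi_mul IH exprS. Qed.

Lemma chi_Aint a : chi a \in Aint.
Proof.
case: (boolP (coprime a f)) => ca; last by rewrite -chi_0 in ca; rewrite (eqP ca) rpred0.
apply: (@Aint_unity_root (totient f)); first by rewrite totient_gt0 f_gt0.
rewrite unity_rootE -chi_exp -chi_mod Euler_exp_totient // chi_mod chi_1.
by [].
Qed.

Lemma N0R_P : (N0%:R : algC) \in P.
Proof. rewrite -(divnK p_N0) natrM; apply: (P_mul HP); [exact: rpred_nat | exact: (P_p HP)]. Qed.

Lemma teich_per a : teich P p (a + N0) = teich P p a.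
Proof.
rewrite /teich dvdn_addl ?p_N0 //; case: (p %| a)%N => //.
congr head; apply: eq_filter => x.
have HN := N0R_P.
apply/idP/idP => H.
  have -> : x - a%:R = (x - (a + N0)%N%:R) + N0%:R by rewrite natrD; ring.
  exact: (P_add HP).
have -> : x - (a + N0)%N%:R = (x - a%:R) - N0%:R by rewrite natrD; ring.
exact: (P_sub2 HP).
Qed.

Lemma chi_tw_per m a : chi_tw P p f chi m (a + N0) = chi_tw P p f chi m a.
Proof.
rewrite /chi_tw -/N0 teich_per.
have -> : chi (a + N0)%N = chi a by rewrite -(divnK f_N0) chi_perk.
suff -> : coprime (a + N0) N0 = coprime a N0 by [].
by rewrite -coprime_modl modnDr coprime_modl.
Qed.

Lemma g_perk a k : g (a + k * N0)%N = g a.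
Proof. elim: k => [|k IH]; first by rewrite addn0. by rewrite mulSn addnCA addnC /g chi_tw_per -/g IH. Qed.

Lemma g_mod a : g (a %% N0)%N = g a.
Proof. by rewrite {2}(divn_eq a N0) addnC g_perk. Qed.

Lemma cop_N0_p a : coprime a N0 -> ~~ (p %| a)%N.
Proof. move=> H; rewrite -prime_coprime // coprime_sym; exact: coprime_dvdr p_N0 H. Qed.

Lemma g_Aint a : g a \in Aint.
Proof.
rewrite /g /chi_tw -/N0; case: ifP => H; last exact: rpred0.
apply: rpredM; first exact: chi_Aint.
case: (teich_spec HP p_odd p_pr (cop_N0_p H)) => Hu _.
have r := ur_root p_odd p_pr Hu.
apply: (@Aint_unity_root p.-1); first by have := prime_gt1 p_pr; case: (p) => [|[|]].
by rewrite unity_rootE -exprVn -exprM mulnC exprM exprVn r invr1 expr1n.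
Qed.

Lemma g_mul a b : coprime a N0 -> coprime b N0 -> g (a * b)%N = g a * g b.
Proof.
move=> ca cb; rewrite /g /chi_tw -/N0 coprimeMl ca cb /= chi_mul.
rewrite (teichM HP p_odd p_pr (cop_N0_p ca) (cop_N0_p cb)) exprMn invfM; ring.
Qed.

Lemma g_tw (c j : nat) : (p.-1 %| c)%N -> forall a, chi_tw P p f chi (n + j * c) a = g a.
Proof.
move=> pc a; rewrite /g /chi_tw; case: ifP => // _; congr (_ * _).
case: (teich_0_or p P a) => [->|Hu].
  by rewrite !expr0n; case: (n) n_gt0 => //.
rewrite exprD; congr (_ ^-1); rewrite -[RHS]mulr1; congr (_ * _).
case/dvdnP: pc => l ->; by rewrite mulnA mulnC exprM (ur_root p_odd p_pr Hu) expr1n.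
Qed.


Let F := conductor N0 g.
Let psi := prim_assoc N0 g.

Lemma ind_NN : induced_mod N0 N0 g.
Proof.
rewrite /induced_mod dvdnn /=; apply/forallP => a; apply/forallP => b.
apply/implyP => /and3P [_ _ H]; rewrite !modn_small // in H.
by have -> : a = b by apply: val_inj; exact/eqP.
Qed.

Lemma F_ind : induced_mod N0 F g.
Proof.
rewrite /F /conductor.
have Hh : has (fun d => induced_mod N0 d g) (iota 1 N0).
  apply/hasP; exists N0; last exact: ind_NN.
  by rewrite mem_iota N0_gt0 add1n ltnSn.
by case: (head_filter_in N0 Hh).
Qed.

Lemma F_dvd : (F %| N0)%N. Proof. by case/andP: F_ind. Qed.
Lemma F_gt0 : (0 < F)%N. Proof. by apply: dvdn_gt0 F_dvd; exact: N0_gt0. Qed.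
Lemma F_odd : odd F. Proof. exact: dvdn_odd F_dvd N0_odd. Qed.

Lemma ind_eq x y : coprime x N0 -> coprime y N0 -> x = y %[mod F] -> g x = g y.
Proof.
move=> cx cy exy; case/andP: F_ind => _ /forallP H.
have := H (Ordinal (ltn_pmod x N0_gt0)); move/forallP/(_ (Ordinal (ltn_pmod y N0_gt0)))/implyP.
rewrite /= !coprime_modl cx cy !(modn_dvdm _ F_dvd) exy eqxx !g_mod => Hg.
by apply/eqP; apply: Hg.
Qed.

Lemma lift_ex a : coprime a F -> has (fun t => coprime (a + F * t) N0) (iota 0 N0).
Proof.
move=> caF.
set t0 := \prod_(q <- primes N0 | ~~ (q %| a)%N) q.
have Hc : coprime (a + F * t0) N0.
  case: (boolP (coprime (a + F * t0) N0)) => // nc; exfalso.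
  set gg := gcdn (a + F * t0) N0.
  have gg_gt1 : (1 < gg)%N.
    by rewrite ltn_neqAle eq_sym nc gcdn_gt0 N0_gt0 orbT.
  set q := pdiv gg.
  have qpr : prime q by apply: pdiv_prime.
  have qa1 : (q %| a + F * t0)%N by apply: dvdn_trans (pdiv_dvd _) (dvdn_gcdl _ _).
  have qN : (q %| N0)%N by apply: dvdn_trans (pdiv_dvd _) (dvdn_gcdr _ _).
  case: (boolP (q %| a)%N) => qa.
    have qF : ~~ (q %| F)%N.
      apply/negP => qF; have : (q %| gcdn a F)%N by rewrite dvdn_gcd qa qF.
      by rewrite (eqP caF) dvdn1; move/eqP => q1; rewrite q1 in qpr.
    rewrite (dvdn_addr _ qa) Euclid_dvdM // (negPf qF) /= Euclid_dvd_prod // big_has_cond in qa1.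
    case/hasP: qa1 => q' Hq' /= /andP [nq'a qq'].
    have q'pr : prime q' by move: Hq'; rewrite mem_primes => /andP [].
    by rewrite (dvdn_prime2 qpr q'pr) in qq'; move: nq'a; rewrite -(eqP qq') qa.
  have qt : (q %| t0)%N.
    rewrite /t0 -big_filter (bigD1_seq q) /=; first by apply: dvdn_mulr.
      by rewrite mem_filter qa mem_primes qpr N0_gt0 qN.
    exact/filter_uniq/primes_uniq.
  by rewrite dvdn_addl ?dvdn_mull // (negPf qa) in qa1.
apply/hasP; exists (t0 %% N0)%N; first by rewrite mem_iota ltn_pmod // N0_gt0.
by rewrite -coprime_modl -modnDmr modnMmr modnDmr coprime_modl.
Qed.

Lemma lift_spec a : coprime a F ->
  coprime (lift_coprime N0 F a) N0 /\ lift_coprime N0 F a = a %[mod F].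
Proof.
move=> caF; rewrite /lift_coprime; split; first by case: (head_filter_in 0 (lift_ex caF)).
by rewrite addnC mulnC modnMDl.
Qed.

Lemma psiE a : psi a = if coprime a F then g (lift_coprime N0 F a) else 0.
Proof. by []. Qed.

Lemma psi_per a : psi (a + F)%N = psi a.
Proof.
rewrite !psiE.
have -> : coprime (a + F) F = coprime a F by rewrite -coprime_modl modnDr coprime_modl.
case: ifP => // caF.
have caF' : coprime (a + F) F by rewrite -coprime_modl modnDr coprime_modl.
case: (lift_spec caF) => c1 e1; case: (lift_spec caF') => c2 e2.
apply: ind_eq => //; by rewrite e1 e2 modnDr.
Qed.

Lemma psi_Aint a : psi a \in Aint.
Proof. rewrite psiE; case: ifP => _; [exact: g_Aint | exact: rpred0]. Qed.

Lemma psi_mulp b : psi (p * b)%N = psi p * psi b.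
Proof.
rewrite !psiE coprimeMl.
case: (boolP (coprime p F)) => cp /=; last by rewrite mul0r.
case: (boolP (coprime b F)) => cb /=; last by rewrite mulr0.
case: (lift_spec cp) => c1 e1; case: (lift_spec cb) => c2 e2.
have cpb : coprime (p * b) F by rewrite coprimeMl cp cb.
case: (lift_spec cpb) => c3 e3.
rewrite -g_mul //; apply: ind_eq => //; first by rewrite coprimeMl c1 c2.
by rewrite e3 -[RHS]modnMm e1 e2 modnMm.
Qed.

End Char.

Lemma mult_sum (p M : nat) (h : nat -> algC) : (0 < p)%N ->
  \sum_(1 <= a < (p * M)%N.+1 | (p %| a)%N) h a = \sum_(1 <= b < M.+1) h (p * b)%N.
Proof.
move=> p0; elim: M => [|M IH]; first by rewrite muln0 !big_geq.
rewrite (@big_cat_nat _ _ _ (p * M).+1) //=; last by rewrite ltnS leq_pmul2l.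
rewrite IH [in RHS]big_nat_recr //=; congr (_ + _).
rewrite big_mkcond big_nat_recr /=; last by rewrite ltn_pmul2l.
rewrite dvdn_mulr // -[RHS]add0r; congr (_ + _).
rewrite big_nat_cond big1 // => i /andP [/andP [H1 H2] _].
case: ifP => // /dvdnP [q Hq]; exfalso; move: H1 H2; rewrite Hq.
rewrite [(q * p)%N]mulnC !ltn_pmul2l //; lia.
Qed.

Section Fin.
Variables (p : nat) (P : pred algC).
Hypothesis HP : prime_ideal_above p P.
Hypothesis p_odd : odd p.
Hypothesis p_pr : prime p.
Variables (psi : nat -> algC) (F : nat).
Hypothesis psiA : forall a, psi a \in Aint.
Hypothesis Fodd : odd F.
Hypothesis Fper : forall a, psi (a + F)%N = psi a.
Hypothesis Fmulp : forall b, psi (p * b)%N = psi p * psi b.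

Definition Tsum (M m : nat) : algC :=
  \sum_(1 <= a < M.+1 | ~~ (p %| a)%N) (-1) ^+ a * psi a * a%:R ^+ m.

Lemma pR0 : (p%:R : algC) != 0.
Proof. by rewrite pnatr_eq0 -lt0n prime_gt0. Qed.

Lemma split_S M m : Ssum (p * M)%N psi m = Tsum (p * M)%N m + psi p * p%:R ^+ m * Ssum M psi m.
Proof.
rewrite /Ssum /Tsum (bigID (fun a => p %| a)%N) /= addrC; congr (_ + _).
rewrite mult_sum ?prime_gt0 // mulr_sumr; apply: eq_bigr => b _.
have sp : (-1) ^+ p = -1 :> algC by rewrite -signr_odd p_odd expr1.
by rewrite Fmulp natrM exprMn exprM sp; ring.
Qed.

Lemma eps_cong k m :
  PI P (((1 - psi p * p%:R ^+ m) * gen_euler F psi m - Tsum (F * p ^ k.+1)%N m) / p%:R ^+ k).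
Proof.
have o1 : odd (p ^ k.+1) by rewrite oddX p_odd orbT.
have o2 : odd (p ^ k) by rewrite oddX p_odd orbT.
case: (euler_cong HP p_odd psiA m Fodd o1 Fper) => W1 HW1 E1.
case: (euler_cong HP p_odd psiA m Fodd o2 Fper) => W2 HW2 E2.
have eM : (F * p ^ k.+1 = p * (F * p ^ k))%N by rewrite expnS mulnCA.
have HS := split_S (F * p ^ k) m; rewrite -eM in HS.
have -> : ((1 - psi p * p%:R ^+ m) * gen_euler F psi m - Tsum (F * p ^ k.+1) m) / p%:R ^+ k
   = F%:R * p%:R * W1 - psi p * p%:R ^+ m * F%:R * W2.
  have E0 : (1 - psi p * p%:R ^+ m) * gen_euler F psi m =
     gen_euler F psi m - psi p * p%:R ^+ m * gen_euler F psi m by ring.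
  rewrite E0 {1}E1 E2 HS !natrM !natrX.
  have pk : (p%:R : algC) ^+ k != 0 by rewrite expf_neq0 // pR0.
  by rewrite exprSr; field.
apply (PI_sub HP); [apply (PI_mul HP); [|exact HW1] | apply (PI_mul HP); [|exact HW2]]; apply (PI_Aint HP);
  by rewrite ?rpredM ?rpredX ?rpred_nat.
Qed.

Lemma fermat_c a c : (p.-1 %| c)%N -> ~~ (p %| a)%N ->
  (a%:R ^+ c - 1 : algC) = p%:R * ((a ^ c - 1) %/ p)%N%:R.
Proof.
move=> pc pa.
have a0 : (0 < a)%N by case: (a) pa => //; rewrite dvdn0.
have dv : (p %| a ^ c - 1)%N.
  rewrite -eqn_mod_dvd ?expn_gt0 ?a0 //.
  case/dvdnP: pc => l ->; rewrite mulnC expnM -modnXm.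
  rewrite -totient_prime // Euler_exp_totient; last by rewrite coprime_sym prime_coprime.
  by rewrite modnXm exp1n.
by rewrite mulrC -natrM divnK // natrB ?natrX // expn_gt0 a0.
Qed.

Lemma Delta_T M k n c : (p.-1 %| c)%N ->
  PI P ((\sum_(j < k.+1) 'C(k, j)%:R * (-1) ^+ (k - j) * Tsum M (n + j * c)%N) / p%:R ^+ k).
Proof.
move=> pc.
have -> : \sum_(j < k.+1) 'C(k, j)%:R * (-1) ^+ (k - j) * Tsum M (n + j * c)%N =
    p%:R ^+ k * \sum_(1 <= a < M.+1 | ~~ (p %| a)%N)
        (-1) ^+ a * psi a * a%:R ^+ n * ((a ^ c - 1) %/ p)%N%:R ^+ k.
  rewrite /Tsum; under eq_bigr do rewrite mulr_sumr.
  rewrite exchange_big mulr_sumr /=; apply: eq_bigr => a pa.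
  have H : (a%:R ^+ c - 1 : algC) ^+ k = p%:R ^+ k * ((a ^ c - 1) %/ p)%N%:R ^+ k.
    by rewrite fermat_c // exprMn.
  have H2 : (a%:R ^+ c - 1 : algC) ^+ k =
      \sum_(j < k.+1) 'C(k, j)%:R * (-1) ^+ (k - j) * a%:R ^+ (j * c).
    rewrite addrC exprDn; apply: eq_bigr => j _; rewrite -mulr_natl mulnC exprM; ring.
  have -> : p%:R ^+ k * ((-1) ^+ a * psi a * a%:R ^+ n * ((a ^ c - 1) %/ p)%N%:R ^+ k) =
     (-1) ^+ a * psi a * a%:R ^+ n * (a%:R ^+ c - 1) ^+ k by rewrite H; ring.
  rewrite H2 mulr_sumr; apply: eq_bigr => j _; rewrite exprD; ring.
have pk : (p%:R : algC) ^+ k != 0 by rewrite expf_neq0 // pR0.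
rewrite mulrC mulKf //.
rewrite big_mkcond; apply (PI_sum HP) => a; apply (PI_Aint HP).
by case: ifP => _; rewrite ?rpred0 // !rpredM ?rpredX ?rpredN ?rpred1 ?rpred_nat.
Qed.
End Fin.

Unset Implicit Arguments.

Theorem theorem3p1 (p f : nat) (chi : nat -> algC) (P : pred algC) (n c k : nat) :
  prime p -> odd p -> odd f -> primitive_char f chi ->
  prime_ideal_above p P ->
  (0 < n)%N -> (0 < c)%N -> (0 < k)%N -> (p.-1 %| c)%N ->
  P_integral P (Delta c k (eps P p f chi) n / (p%:R) ^+ k).
Proof.
move=> p_pr p_odd f_odd [chiD _] HP n_gt0 c_gt0 k_gt0 pc.
set g := chi_tw P p f chi n.
set psi := prim_assoc (lcmn f p) g.
set F := conductor (lcmn f p) g.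
have psiA : forall a, psi a \in Aint by move=> a; exact: psi_Aint.
have Fodd : odd F by exact: F_odd.
have Fper : forall a, psi (a + F)%N = psi a by move=> a; exact: psi_per.
have Fmulp : forall b, psi (p * b)%N = psi p * psi b by move=> b; exact: psi_mulp.
have Heps : forall j : nat, eps P p f chi (n + j * c) =
    (1 - psi p * p%:R ^+ (n + j * c)) * gen_euler F psi (n + j * c).
  move=> j; rewrite /eps /chi_n /cond_n.
  have -> : chi_tw P p f chi (n + j * c) = g.
    by apply: functional_extensionality => a; apply: g_tw.
  by [].
set M := (F * p ^ k.+1)%N.
have pk : (p%:R : algC) ^+ k != 0 by rewrite expf_neq0 // pnatr_eq0 -lt0n prime_gt0.
have -> : Delta c k (eps P p f chi) n / p%:R ^+ k =
   \sum_(j < k.+1) ('C(k, j)%:R * (-1) ^+ (k - j)) *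
       (((1 - psi p * p%:R ^+ (n + j * c)) * gen_euler F psi (n + j * c)
          - Tsum p psi M (n + j * c)) / p%:R ^+ k)
   + (\sum_(j < k.+1) 'C(k, j)%:R * (-1) ^+ (k - j) * Tsum p psi M (n + j * c)) / p%:R ^+ k.
  rewrite /Delta !mulr_suml -big_split /=; apply: eq_bigr => j _.
  rewrite Heps; by field.
apply: (PI_add HP).
  apply: (PI_sum HP) => j; apply: (PI_mul HP).
    by apply: (PI_Aint HP); rewrite rpredM ?rpredX ?rpredN ?rpred1 ?rpred_nat.
  exact: eps_cong.
exact: Delta_T.
Qed.
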